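(* Let $E$ be an $\mathbb{R}$-group, $X$ a locally compact (Hausdorff) space not reduced to one point, and $\mathcal{H}=(H_\varepsilon)_{\varepsilon\in E}$ a continuous absorptive action of $E$ on $X$ with center $\omega$. Then: (i) there is a neighbourhood base at $\omega$ consisting of balanced absorbent sets; (ii) a set $T\subset X$ is bounded if and only if it is relatively compact; (iii) elementary sets exist; moreover, if $F$ is an elementary set, then the sets $H_n(F)$, $n$ ranging over the positive integers (viewed as elements of $E$), form a neighbourhood base at $\omega$, and the sets $H_{n^{-1}}(F)$, $n$ ranging over the positive integers, cover $X$.
   Context: An $\mathbb{R}$-group is an abelian group $E$ (operation written multiplicatively) whose underlying set is a subset of $\mathbb{R}$ containing all positive integers, such that: (RG1) with the natural order of $\mathbb{R}$, $E$ is a totally ordered group; (RG2) with the topology induced from $\mathbb{R}$, $E$ is a locally compact group; (RG3) there is a nonconstant continuous homomorphism $h:E\to\mathbb{R}_+^*$ such that for every $\alpha\in E$ the set $\{\varepsilon\in E:\varepsilon\ge\alpha\}$ is integrable for $h\cdot m$, $m$ a Haar measure on $E$. $e$ is the identity of $E$, $\varepsilon^{-1}$ the group inverse, $\theta=\inf E\in\mathbb{R}\cup\{\pm\infty\}$; inequalities refer to the order of $\mathbb{R}$. An action of $E$ on $X$ is a family $\mathcal{H}=(H_\varepsilon)_{\varepsilon\in E}$ of bijections of $X$ with $H_\varepsilon\circ H_{\varepsilon'}=H_{\varepsilon\varepsilon'}$, $H_e=\mathrm{id}_X$; it is continuous if $(\varepsilon,x)\mapsto H_\varepsilon(x)$ is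 continuous on $E\times X$. It is absorptive if some $\omega\in X$ satisfies (ABS): for every neighbourhood $V$ of $\omega$ and every $x\in X$ there are a neighbourhood $U$ of $x$ and $\alpha\in E$ with $H_{\varepsilon^{-1}}(U)\subset V$ for all $\varepsilon\le\alpha$. For a continuous absorptive action such $\omega$ is unique and called the center. For $T,S\subset X$: $T$ absorbs $S$ if there is $\alpha\in E$ with $H_{\varepsilon^{-1}}(S)\subset T$ for all $\varepsilon\le\alpha$; $T$ is absorbent if it absorbs every singleton $\{x\}$, $x\in X$; $T$ is balanced if $H_{\varepsilon^{-1}}(T)\subset T$ for all $\varepsilon\le e$. $T$ is bounded if it is absorbed by every neighbourhood of the center $\omega$. $T$ is elementary if it is a balanced relatively compact neighbourhood of $\omega$. *)

(* Defs.v *)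
From Stdlib Require Import Reals List.
Open Scope R_scope.

Definition is_topology {X : Type} (op : (X -> Prop) -> Prop) : Prop :=
  op (fun _ => True) /\
  op (fun _ => False) /\
  (forall U V, op U -> op V -> op (fun x => U x /\ V x)) /\
  (forall (I : Type) (F : I -> X -> Prop),
      (forall i, op (F i)) -> op (fun x => exists i, F i x)) /\
  (forall U V, (forall x, U x <-> V x) -> op U -> op V).

Definition tnbhd {X : Type} (op : (X -> Prop) -> Prop) (V : X -> Prop) (x : X) : Prop :=
  exists U, op U /\ U x /\ forall y, U y -> V y.

Definition tcompact {X : Type} (op : (X -> Prop) -> Prop) (K : X -> Prop) : Prop :=
  forall (I : Type) (U : I -> X -> Prop),
    (forall i, op (U i)) ->
    (forall x, K x -> exists i, U i x) ->
    exists l : list I, forall x, K x -> exists i, In i l /\ U i x.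

Definition tclosure {X : Type} (op : (X -> Prop) -> Prop) (S : X -> Prop) (x : X) : Prop :=
  forall V, tnbhd op V x -> exists y, V y /\ S y.

Definition relatively_compact {X : Type} (op : (X -> Prop) -> Prop) (S : X -> Prop) : Prop :=
  tcompact op (tclosure op S).

Definition hausdorff {X : Type} (op : (X -> Prop) -> Prop) : Prop :=
  forall x y, x <> y -> exists U V, op U /\ op V /\ U x /\ V y /\
    forall z, U z -> V z -> False.

(* Bourbaki convention: locally compact includes Hausdorff *)
Definition locally_compact {X : Type} (op : (X -> Prop) -> Prop) : Prop :=
  hausdorff op /\ forall x, exists K, tcompact op K /\ tnbhd op K x.

Definition prod_top {X Y : Type} (opX : (X -> Prop) -> Prop) (opY : (Y -> Prop) -> Prop)
  (W : X * Y -> Prop) : Prop :=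
  forall p, W p -> exists A B, opX A /\ opY B /\ A (fst p) /\ B (snd p) /\
    forall a b, A a -> B b -> W (a, b).

Definition tcontinuous {X Y : Type} (opX : (X -> Prop) -> Prop) (opY : (Y -> Prop) -> Prop)
  (f : X -> Y) : Prop :=
  forall V, opY V -> opX (fun x => V (f x)).

(* E is given by its underlying set Ein (a subset of R), its group law mul,
   inverse inv and identity e.  Only values on Ein matter. *)

Definition Etype (Ein : R -> Prop) : Type := {x : R | Ein x}.

Definition opE (Ein : R -> Prop) (U : Etype Ein -> Prop) : Prop :=
  exists V : R -> Prop, Rtopology.open_set V /\
    forall x : Etype Ein, U x <-> V (proj1_sig x).

Definition cont_on_E (Ein : R -> Prop) (f : R -> R) : Prop :=
  forall a, Ein a -> forall eps, eps > 0 -> exists d, d > 0 /\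
    forall a', Ein a' -> Rabs (a' - a) < d -> Rabs (f a' - f a) < eps.

Definition CcE (Ein : R -> Prop) (f : R -> R) : Prop :=
  cont_on_E Ein f /\
  exists K : Etype Ein -> Prop, tcompact (opE Ein) K /\
    forall x : Etype Ein, ~ K x -> f (proj1_sig x) = 0.

(* A Haar measure on E, in Bourbaki's sense: a nonzero positive
   translation-invariant linear functional on K(E). *)
Definition haar_measure (Ein : R -> Prop) (mul : R -> R -> R) (I : (R -> R) -> R) : Prop :=
  (forall f g, CcE Ein f -> CcE Ein g -> (forall x, Ein x -> f x = g x) -> I f = I g) /\
  (forall f g, CcE Ein f -> CcE Ein g -> I (fun x => f x + g x) = I f + I g) /\
  (forall c f, CcE Ein f -> I (fun x => c * f x) = c * I f) /\
  (forall f, CcE Ein f -> (forall x, Ein x -> 0 <= f x) -> 0 <= I f) /\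
  (exists f, CcE Ein f /\ I f <> 0) /\
  (forall a f, Ein a -> CcE Ein f -> I (fun x => f (mul a x)) = I f).

(* The set S is integrable for the measure h.m (m given by the functional I):
   the upper integral of h * 1_S is finite.  For the sets used below
   (S = {eps >= alpha}, closed in E) this is equivalent to the boundedness of
   I on the f in K(E) with 0 <= f <= h * 1_S. *)
Definition integrable_for (Ein : R -> Prop) (I : (R -> R) -> R) (h : R -> R)
  (S : R -> Prop) : Prop :=
  exists M, forall f, CcE Ein f ->
    (forall x, Ein x -> 0 <= f x /\ (f x <= 0 \/ (S x /\ f x <= h x))) ->
    I f <= M.

Record is_Rgroup (Ein : R -> Prop) (mul : R -> R -> R) (inv : R -> R) (e : R) : Prop := {
  rg_nat : forall n : nat, (1 <= n)%nat -> Ein (INR n);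
  rg_mul_in : forall a b, Ein a -> Ein b -> Ein (mul a b);
  rg_inv_in : forall a, Ein a -> Ein (inv a);
  rg_e_in : Ein e;
  rg_assoc : forall a b c, Ein a -> Ein b -> Ein c -> mul a (mul b c) = mul (mul a b) c;
  rg_comm : forall a b, Ein a -> Ein b -> mul a b = mul b a;
  rg_unit : forall a, Ein a -> mul e a = a;
  rg_invl : forall a, Ein a -> mul (inv a) a = e;
  rg_ordered : forall a b c, Ein a -> Ein b -> Ein c -> a <= b -> mul a c <= mul b c;
  rg_mul_cont : forall a b, Ein a -> Ein b -> forall eps, eps > 0 -> exists d, d > 0 /\
      forall a' b', Ein a' -> Ein b' -> Rabs (a' - a) < d -> Rabs (b' - b) < d ->
        Rabs (mul a' b' - mul a b) < eps;
  rg_inv_cont : cont_on_E Ein inv;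
  rg_loc_compact : locally_compact (opE Ein);
  rg_RG3 : exists (h : R -> R) (I : (R -> R) -> R),
      cont_on_E Ein h /\
      (forall a, Ein a -> 0 < h a) /\
      (forall a b, Ein a -> Ein b -> h (mul a b) = h a * h b) /\
      (exists a b, Ein a /\ Ein b /\ h a <> h b) /\
      haar_measure Ein mul I /\
      forall alpha, Ein alpha -> integrable_for Ein I h (fun x => alpha <= x)
}.

Record is_action {X : Type} (Ein : R -> Prop) (mul : R -> R -> R) (e : R)
  (H : R -> X -> X) : Prop := {
  act_bij : forall eps, Ein eps ->
      (forall x y, H eps x = H eps y -> x = y) /\ (forall y, exists x, H eps x = y);
  act_mul : forall eps eps' x, Ein eps -> Ein eps' -> H eps (H eps' x) = H (mul eps eps') x;
  act_e : forall x, H e x = x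
}.

Definition action_continuous {X : Type} (Ein : R -> Prop) (opX : (X -> Prop) -> Prop)
  (H : R -> X -> X) : Prop :=
  tcontinuous (prod_top (opE Ein) opX) opX
    (fun p : Etype Ein * X => H (proj1_sig (fst p)) (snd p)).

Definition absorbs {X : Type} (Ein : R -> Prop) (inv : R -> R) (H : R -> X -> X)
  (T S : X -> Prop) : Prop :=
  exists alpha, Ein alpha /\ forall eps, Ein eps -> eps <= alpha ->
    forall y, S y -> T (H (inv eps) y).

Definition absorbent {X : Type} (Ein : R -> Prop) (inv : R -> R) (H : R -> X -> X)
  (T : X -> Prop) : Prop :=
  forall x, absorbs Ein inv H T (fun y => y = x).

Definition balanced {X : Type} (Ein : R -> Prop) (inv : R -> R) (e : R) (H : R -> X -> X)
  (T : X -> Prop) : Prop :=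
  forall eps, Ein eps -> eps <= e -> forall y, T y -> T (H (inv eps) y).

Definition ABS {X : Type} (Ein : R -> Prop) (inv : R -> R) (opX : (X -> Prop) -> Prop)
  (H : R -> X -> X) (omega : X) : Prop :=
  forall V, tnbhd opX V omega -> forall x, exists U alpha,
    tnbhd opX U x /\ Ein alpha /\
    forall eps, Ein eps -> eps <= alpha -> forall y, U y -> V (H (inv eps) y).

Definition act_bounded {X : Type} (Ein : R -> Prop) (inv : R -> R) (opX : (X -> Prop) -> Prop)
  (H : R -> X -> X) (omega : X) (T : X -> Prop) : Prop :=
  forall V, tnbhd opX V omega -> absorbs Ein inv H V T.

Definition elementary {X : Type} (Ein : R -> Prop) (inv : R -> R) (e : R)
  (opX : (X -> Prop) -> Prop) (H : R -> X -> X) (omega : X) (T : X -> Prop) : Prop :=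
  balanced Ein inv e H T /\ relatively_compact opX T /\ tnbhd opX T omega.

Definition act_image {X : Type} (f : X -> X) (S : X -> Prop) : X -> Prop :=
  fun z => exists y, S y /\ z = f y.

(* Main.v *)
Require Import Defs.
From Stdlib Require Import Reals Lra List Classical.
Open Scope R_scope.

Lemma open_local {X} (op : (X->Prop)->Prop) (P : X -> Prop) :
  is_topology op ->
  (forall x, P x -> exists U, op U /\ U x /\ forall y, U y -> P y) -> op P.
Proof.
  intros [_ [_ [_ [Hun Hext]]]] HP.
  apply (Hext (fun x => exists i : {U : X -> Prop | op U /\ forall y, U y -> P y}, proj1_sig i x)).
  - intros x; split.
    + intros [i Hx]. destruct (proj2_sig i) as [_ HiP]. auto.
    + intros Hx. destruct (HP x Hx) as [U [HU [HUx HUP]]].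
      exists (exist _ U (conj HU HUP)). exact HUx.
  - apply Hun. intros i; exact (proj1 (proj2_sig i)).
Qed.

Lemma opnbhd {X} (op : (X->Prop)->Prop) (U : X -> Prop) x : op U -> U x -> tnbhd op U x.
Proof. intros; exists U; repeat split; auto. Qed.

Lemma nbhd_point {X} (op : (X->Prop)->Prop) (U : X -> Prop) x : tnbhd op U x -> U x.
Proof. intros [V [_ [Vx HV]]]; auto. Qed.

Lemma nbhd_mono {X} (op : (X->Prop)->Prop) (U V : X -> Prop) x :
  tnbhd op U x -> (forall y, U y -> V y) -> tnbhd op V x.
Proof. intros [W [HW [Wx HWU]]] HUV; exists W; repeat split; auto. Qed.

Lemma point_in_closure {X} (op : (X->Prop)->Prop) (S : X -> Prop) x : S x -> tclosure op S x.
Proof. intros Sx V HV. exists x; split; auto. eapply nbhd_point; eauto. Qed.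

Lemma closure_closed {X} (op : (X->Prop)->Prop) (S : X -> Prop) :
  is_topology op -> op (fun x => ~ tclosure op S x).
Proof.
  intros Ht. apply open_local; auto.
  intros x Hx. unfold tclosure in Hx.
  apply not_all_ex_not in Hx. destruct Hx as [V HV].
  apply imply_to_and in HV. destruct HV as [[U [HU [HUx HUV]]] HnS].
  exists U. split; [exact HU|split;[exact HUx|]].
  intros y Uy Hcl. apply HnS.
  destruct (Hcl U) as [z [Uz Sz]].
  - apply opnbhd; auto.
  - exists z; auto.
Qed.

Lemma closure_sub_closed {X} (op : (X->Prop)->Prop) (S C : X -> Prop) :
  op (fun x => ~ C x) -> (forall x, S x -> C x) -> forall x, tclosure op S x -> C x.
Proof.
  intros HC HSC x Hx. apply NNPP; intro Hn.
  destruct (Hx (fun y => ~ C y)) as [y [Hy Sy]].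
  - apply opnbhd; auto.
  - auto.
Qed.

Lemma inter_list {X} (op : (X->Prop)->Prop) (J : Type) (f : J -> X -> Prop) (x : X) :
  is_topology op -> forall l : list J, (forall j, In j l -> op (f j) /\ f j x) ->
  exists U, op U /\ U x /\ forall j, In j l -> forall z, U z -> f j z.
Proof.
  intros [Htop [_ [Hint _]]] l. induction l as [|j l IH]; intros Hl.
  - exists (fun _ => True). repeat split; auto. intros j [].
  - destruct IH as [U [HU [Ux HUl]]]. { intros k Hk; apply Hl; right; auto. }
    destruct (Hl j (or_introl eq_refl)) as [Hj Hjx].
    exists (fun z => f j z /\ U z). split; [apply Hint; auto|]. split; [auto|].
    intros k [<-|Hk] z [Hz1 Hz2]; [auto|]. apply (HUl k Hk z Hz2).
Qed.

Lemma compact_closed {X} (op : (X->Prop)->Prop) (K : X -> Prop) :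
  is_topology op -> hausdorff op -> tcompact op K -> op (fun x => ~ K x).
Proof.
  intros Ht Hh HK. apply open_local; auto. intros x Hx.
  destruct (HK {p : (X->Prop)*(X->Prop) | op (fst p) /\ op (snd p) /\ fst p x /\
                  forall z, fst p z -> snd p z -> False}
               (fun i => snd (proj1_sig i))) as [l Hl].
  - intros i. exact (proj1 (proj2 (proj2_sig i))).
  - intros y Ky. assert (Hxy : x <> y) by (intro; subst; auto).
    destruct (Hh x y Hxy) as [U [V [HU [HV [Ux [Vy Hd]]]]]].
    exists (exist _ (U,V) (conj HU (conj HV (conj Ux Hd)))). exact Vy.
  - destruct (inter_list op _ (fun i => fst (proj1_sig i)) x Ht l) as [U [HU [Ux HUl]]].
    + intros i _. destruct (proj2_sig i) as [H1 [_ [H3 _]]]. split; auto.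
    + exists U. repeat split; auto. intros z Uz Kz.
      destruct (Hl z Kz) as [i [Hin Hz]].
      pose proof (HUl i Hin z Uz) as Hz'.
      destruct i as [p [H1 [H2 [H3 H4]]]]. simpl in *.
      apply (H4 z); auto.
Qed.

Lemma closed_in_compact {X} (op : (X->Prop)->Prop) (C K : X -> Prop) :
  op (fun x => ~ C x) -> (forall x, C x -> K x) -> tcompact op K -> tcompact op C.
Proof.
  intros HC HCK HK I U HU Hcov.
  destruct (HK (option I) (fun o => match o with Some i => U i | None => fun x => ~ C x end)) as [l Hl].
  - intros [i|]; auto.
  - intros x Kx. destruct (classic (C x)) as [Cx|nCx].
    + destruct (Hcov x Cx) as [i Hi]. exists (Some i); auto.
    + exists None; auto.
  - exists (flat_map (fun o => match o with Some i => i :: nil | None => nil end) l).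
    intros x Cx. destruct (Hl x (HCK x Cx)) as [[i|] [Hin Hx]].
    + exists i. split; auto. apply in_flat_map. exists (Some i). split; auto. simpl; auto.
    + contradiction.
Qed.

Lemma image_compact {X} (op : (X->Prop)->Prop) (f : X -> X) (K : X -> Prop) :
  (forall U, op U -> op (fun x => U (f x))) -> tcompact op K -> tcompact op (act_image f K).
Proof.
  intros Hf HK I U HU Hcov.
  destruct (HK I (fun i x => U i (f x))) as [l Hl].
  - intros i; apply Hf; auto.
  - intros x Kx. apply Hcov. exists x; auto.
  - exists l. intros z [y [Ky ->]]. apply Hl; auto.
Qed.

Lemma subset_compact_relcompact {X} (op : (X->Prop)->Prop) (S K : X -> Prop) :
  is_topology op -> hausdorff op -> tcompact op K -> (forall x, S x -> K x) ->
  relatively_compact op S.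
Proof.
  intros Ht Hh HK HSK. unfold relatively_compact.
  apply (closed_in_compact op _ K); auto.
  - apply closure_closed; auto.
  - apply closure_sub_closed; auto. apply compact_closed; auto.
Qed.


Lemma g_mul_e Ein mul inv e (G : is_Rgroup Ein mul inv e) a : Ein a -> mul a e = a.
Proof.
  intros Ha. rewrite (rg_comm _ _ _ _ G); auto using (rg_e_in _ _ _ _ G).
  apply (rg_unit _ _ _ _ G); auto.
Qed.

Lemma g_mul_inv Ein mul inv e (G : is_Rgroup Ein mul inv e) a : Ein a -> mul a (inv a) = e.
Proof.
  intros Ha. rewrite (rg_comm _ _ _ _ G); auto using (rg_inv_in _ _ _ _ G).
  apply (rg_invl _ _ _ _ G); auto.
Qed.

Lemma g_inv_unique Ein mul inv e (G : is_Rgroup Ein mul inv e) c x :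
  Ein c -> Ein x -> mul c x = e -> c = inv x.
Proof.
  intros Hc Hx Hcx.
  rewrite <- (g_mul_e _ _ _ _ G c Hc), <- (g_mul_inv _ _ _ _ G x Hx).
  rewrite (rg_assoc _ _ _ _ G); auto using (rg_inv_in _ _ _ _ G).
  rewrite Hcx. apply (rg_unit _ _ _ _ G); auto using (rg_inv_in _ _ _ _ G).
Qed.

Lemma g_inv_inv Ein mul inv e (G : is_Rgroup Ein mul inv e) a : Ein a -> inv (inv a) = a.
Proof.
  intros Ha. symmetry. apply (g_inv_unique _ _ _ _ G); auto using (rg_inv_in _ _ _ _ G).
  apply (g_mul_inv _ _ _ _ G); auto.
Qed.

Lemma g_inv_mul Ein mul inv e (G : is_Rgroup Ein mul inv e) a b : Ein a -> Ein b ->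
  inv (mul a b) = mul (inv a) (inv b).
Proof.
  intros Ha Hb. pose proof (rg_inv_in _ _ _ _ G a Ha). pose proof (rg_inv_in _ _ _ _ G b Hb).
  symmetry. apply (g_inv_unique _ _ _ _ G); auto using (rg_mul_in _ _ _ _ G).
  rewrite <- (rg_assoc _ _ _ _ G); auto using (rg_mul_in _ _ _ _ G).
  rewrite ((rg_comm _ _ _ _ G) a b) by auto.
  rewrite ((rg_assoc _ _ _ _ G) (inv b)) by auto.
  rewrite ((rg_invl _ _ _ _ G) b), ((rg_unit _ _ _ _ G) a) by auto.
  apply (rg_invl _ _ _ _ G); auto.
Qed.

Lemma g_inv_le Ein mul inv e (G : is_Rgroup Ein mul inv e) a b : Ein a -> Ein b ->
  a <= b -> inv b <= inv a.
Proof.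
  intros Ha Hb Hab. pose proof (rg_inv_in _ _ _ _ G a Ha) as Ia.
  pose proof (rg_inv_in _ _ _ _ G b Hb) as Ib.
  pose proof ((rg_ordered _ _ _ _ G) a b (mul (inv a) (inv b)) Ha Hb
     ltac:(apply (rg_mul_in _ _ _ _ G); auto) Hab) as Hle.
  rewrite ((rg_assoc _ _ _ _ G) a) in Hle by auto.
  rewrite ((rg_comm _ _ _ _ G) (inv a) (inv b)) in Hle by auto.
  rewrite ((rg_assoc _ _ _ _ G) b) in Hle by auto.
  rewrite (g_mul_inv _ _ _ _ G a), (g_mul_inv _ _ _ _ G b) in Hle by auto.
  rewrite ((rg_unit _ _ _ _ G)), ((rg_unit _ _ _ _ G)) in Hle by auto.
  exact Hle.
Qed.

Lemma Rmin_in (Ein : R -> Prop) a b : Ein a -> Ein b -> Ein (Rmin a b).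
Proof. intros; unfold Rmin; destruct Rle_dec; auto. Qed.

Lemma arch_n (r : R) : exists n : nat, (1 <= n)%nat /\ r <= INR n.
Proof.
  destruct (INR_unbounded (Rmax r 1)) as [n Hn].
  exists n. split.
  - destruct n; [simpl in Hn; pose proof (Rmax_r r 1); lra| apply le_n_S, le_0_n].
  - pose proof (Rmax_l r 1); lra.
Qed.

Ltac gf G := pose proof (rg_mul_in _ _ _ _ G) as Gmul;
  pose proof (rg_inv_in _ _ _ _ G) as Ginv; pose proof (rg_e_in _ _ _ _ G) as Ge.

Lemma H_cont {X} Ein (opX : (X->Prop)->Prop) (H : R -> X -> X) d :
  is_topology opX -> action_continuous Ein opX H -> Ein d ->
  forall U, opX U -> opX (fun x => U (H d x)).
Proof.
  intros Ht Hc Hd U HU. apply open_local; auto. intros x Hx.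
  destruct (Hc U HU (exist _ d Hd, x) Hx) as [A [B [HA [HB [Ha [Hb HAB]]]]]].
  exists B. repeat split; auto. intros y By. apply (HAB _ y Ha By).
Qed.

Lemma H_inv_l {X} Ein mul inv e (H : R -> X -> X) (G : is_Rgroup Ein mul inv e)
  (A : is_action Ein mul e H) d x : Ein d -> H (inv d) (H d x) = x.
Proof.
  intros Hd. gf G. rewrite (act_mul _ _ _ _ A) by auto.
  rewrite (rg_invl _ _ _ _ G) by auto. apply (act_e _ _ _ _ A).
Qed.

Lemma H_inv_r {X} Ein mul inv e (H : R -> X -> X) (G : is_Rgroup Ein mul inv e)
  (A : is_action Ein mul e H) d x : Ein d -> H d (H (inv d) x) = x.
Proof.
  intros Hd. gf G. rewrite (act_mul _ _ _ _ A) by auto.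
  rewrite (g_mul_inv _ _ _ _ G) by auto. apply (act_e _ _ _ _ A).
Qed.

Lemma fixed_omega {X} Ein mul inv e (opX : (X->Prop)->Prop) (H : R -> X -> X) omega
  (G : is_Rgroup Ein mul inv e) (Ht : is_topology opX) (Hlc : locally_compact opX)
  (A : is_action Ein mul e H) (Hc : action_continuous Ein opX H)
  (Habs : ABS Ein inv opX H omega) d : Ein d -> H d omega = omega.
Proof.
  intros Hd. gf G. apply NNPP; intro Hne.
  destruct Hlc as [Hh _].
  destruct (Hh _ _ Hne) as [W [U [HW [HU [Wz [Uo Hdisj]]]]]].
  assert (HN : opX (fun x => W (H d x))) by (apply (H_cont Ein); auto).
  destruct (Habs _ (opnbhd _ _ omega HN Wz) omega) as [U1 [a1 [HU1 [Ha1 H1]]]].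
  destruct (Habs U (opnbhd _ U omega HU Uo) omega) as [U2 [a2 [HU2 [Ha2 H2]]]].
  set (eps := Rmin a1 (mul a2 d)).
  assert (Heps : Ein eps) by (apply Rmin_in; auto).
  assert (Hle1 : eps <= a1) by apply Rmin_l.
  assert (Hle2 : eps <= mul a2 d) by apply Rmin_r.
  pose proof (H1 eps Heps Hle1 omega (nbhd_point _ _ _ HU1)) as P1. simpl in P1.
  assert (Hle3 : mul eps (inv d) <= a2).
  { pose proof ((rg_ordered _ _ _ _ G) eps (mul a2 d) (inv d)) as Ho.
    rewrite <- (rg_assoc _ _ _ _ G), (g_mul_inv _ _ _ _ G), (g_mul_e _ _ _ _ G) in Ho; auto. }
  pose proof (H2 (mul eps (inv d)) (Gmul _ _ Heps (Ginv _ Hd)) Hle3 omega (nbhd_point _ _ _ HU2)) as P2.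
  rewrite (act_mul _ _ _ _ A) in P1 by auto.
  rewrite (g_inv_mul _ _ _ _ G), (g_inv_inv _ _ _ _ G), (rg_comm _ _ _ _ G) in P2; auto.
  exact (Hdisj _ P1 P2).
Qed.

Lemma image_nbhd {X} Ein mul inv e (opX : (X->Prop)->Prop) (H : R -> X -> X) omega
  (G : is_Rgroup Ein mul inv e) (Ht : is_topology opX) (Hlc : locally_compact opX)
  (A : is_action Ein mul e H) (Hc : action_continuous Ein opX H)
  (Habs : ABS Ein inv opX H omega) d N :
  Ein d -> tnbhd opX N omega -> tnbhd opX (act_image (H d) N) omega.
Proof.
  intros Hd [U0 [HU0 [U0o HU0N]]]. gf G.
  exists (fun x => U0 (H (inv d) x)). split; [apply (H_cont Ein); auto|]. split.
  - rewrite (fixed_omega _ _ _ _ _ _ _ G Ht Hlc A Hc Habs); auto.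
  - intros x Hx. exists (H (inv d) x). split; auto.
    symmetry. apply (H_inv_r _ _ _ _ _ G A); auto.
Qed.

Lemma balanced_nbhd {X} Ein mul inv e (opX : (X->Prop)->Prop) (H : R -> X -> X) omega
  (G : is_Rgroup Ein mul inv e) (Ht : is_topology opX) (Hlc : locally_compact opX)
  (A : is_action Ein mul e H) (Hc : action_continuous Ein opX H)
  (Habs : ABS Ein inv opX H omega) V :
  tnbhd opX V omega -> exists W, tnbhd opX W omega /\ balanced Ein inv e H W /\
    forall y, W y -> V y.
Proof.
  intros HV. gf G. destruct (Habs V HV omega) as [U [a [HU [Ha Hav]]]].
  set (b := Rmin a e).
  assert (Hb : Ein b) by (apply Rmin_in; auto).
  assert (Hba : b <= a) by apply Rmin_l.
  assert (Hbe : b <= e) by apply Rmin_r.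
  exists (fun y => exists eps, Ein eps /\ eps <= b /\ exists u, U u /\ y = H (inv eps) u).
  split; [|split].
  - apply nbhd_mono with (act_image (H (inv b)) U).
    + apply (image_nbhd _ _ _ _ _ _ _ G Ht Hlc A Hc Habs); auto.
    + intros y [u [Uu ->]]. exists b. split; auto. split; [lra|]. exists u; auto.
  - intros eps0 He0 Hle0 y [eps [He [Hle [u [Uu ->]]]]].
    exists (mul eps0 eps). split; [auto|]. split.
    + pose proof ((rg_ordered _ _ _ _ G) eps0 e eps He0 Ge He Hle0) as Ho.
      rewrite (rg_unit _ _ _ _ G) in Ho by auto. lra.
    + exists u. split; auto. rewrite (act_mul _ _ _ _ A) by auto.
      rewrite (g_inv_mul _ _ _ _ G) by auto. reflexivity.
  - intros y [eps [He [Hle [u [Uu ->]]]]]. apply Hav; auto. lra.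
Qed.

Lemma relcomp_bounded {X} Ein mul inv e (opX : (X->Prop)->Prop) (H : R -> X -> X) omega
  (G : is_Rgroup Ein mul inv e) (Habs : ABS Ein inv opX H omega) T :
  relatively_compact opX T -> act_bounded Ein inv opX H omega T.
Proof.
  intros HT V HV. gf G.
  destruct (HT {U : X -> Prop | opX U /\ exists a, Ein a /\ forall eps, Ein eps -> eps <= a ->
                  forall y, U y -> V (H (inv eps) y)} (fun i => proj1_sig i)) as [l Hl].
  - intros i; exact (proj1 (proj2_sig i)).
  - intros x _. destruct (Habs V HV x) as [U [a [[U0 [HU0 [U0x HU0U]]] [Ha Hua]]]].
    exists (exist _ U0 (conj HU0 (ex_intro _ a (conj Ha
       (fun eps He Hle y Hy => Hua eps He Hle y (HU0U y Hy)))))). exact U0x.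
  - assert (Hmin : forall l' : list {U : X -> Prop | opX U /\ exists a, Ein a /\
                forall eps, Ein eps -> eps <= a -> forall y, U y -> V (H (inv eps) y)},
       exists a, Ein a /\ forall i, In i l' -> forall eps, Ein eps -> eps <= a ->
         forall y, proj1_sig i y -> V (H (inv eps) y)).
    { induction l' as [|i l' IH].
      - exists e. split; auto. intros i [].
      - destruct IH as [a [Ha Hal]]. destruct (proj2_sig i) as [_ [b [Hb Hub]]].
        exists (Rmin a b). split; [apply Rmin_in; auto|].
        intros j [<-|Hj] eps He Hle y Hy.
        + apply (Hub eps He); auto. pose proof (Rmin_r a b); lra.
        + apply (Hal j Hj eps He); auto. pose proof (Rmin_l a b); lra. }
    destruct (Hmin l) as [a [Ha Hal]]. exists a. split; auto.
    intros eps He Hle y Ty.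
    destruct (Hl y (point_in_closure _ _ _ Ty)) as [i [Hin Hi]].
    apply (Hal i Hin eps He Hle y Hi).
Qed.

Lemma elementary_exists {X} Ein mul inv e (opX : (X->Prop)->Prop) (H : R -> X -> X) omega
  (G : is_Rgroup Ein mul inv e) (Ht : is_topology opX) (Hlc : locally_compact opX)
  (A : is_action Ein mul e H) (Hc : action_continuous Ein opX H)
  (Habs : ABS Ein inv opX H omega) :
  exists F, elementary Ein inv e opX H omega F.
Proof.
  pose proof Hlc as [Hh Hloc]. destruct (Hloc omega) as [K [HK HKn]].
  destruct (balanced_nbhd _ _ _ _ _ _ _ G Ht Hlc A Hc Habs K HKn) as [W [HWn [HWb HWK]]].
  exists W. split; [auto|split; auto].
  apply (subset_compact_relcompact _ _ K); auto.
Qed.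

Lemma bounded_relcomp {X} Ein mul inv e (opX : (X->Prop)->Prop) (H : R -> X -> X) omega
  (G : is_Rgroup Ein mul inv e) (Ht : is_topology opX) (Hlc : locally_compact opX)
  (A : is_action Ein mul e H) (Hc : action_continuous Ein opX H)
  (Habs : ABS Ein inv opX H omega) T :
  act_bounded Ein inv opX H omega T -> relatively_compact opX T.
Proof.
  intros HT. gf G.
  destruct (elementary_exists _ _ _ _ _ _ _ G Ht Hlc A Hc Habs) as [F [HFb [HFc HFn]]].
  destruct (HT F HFn) as [a [Ha Hat]].
  assert (HCc : opX (fun y => ~ tclosure opX F (H (inv a) y))).
  { apply (H_cont Ein opX H (inv a) Ht Hc (Ginv _ Ha) (fun z => ~ tclosure opX F z)).
    apply closure_closed; auto. }
  assert (HCK : forall y, tclosure opX F (H (inv a) y) -> act_image (H a) (tclosure opX F) y).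
  { intros y Cy. exists (H (inv a) y). split; auto. symmetry. apply (H_inv_r _ _ _ _ _ G A); auto. }
  assert (HK : tcompact opX (act_image (H a) (tclosure opX F))).
  { apply image_compact; auto. intros U HU. apply (H_cont Ein); auto. }
  unfold relatively_compact. apply (closed_in_compact _ _ (act_image (H a) (tclosure opX F)) (closure_closed _ _ Ht)); auto.
  intros x Hx. apply HCK.
  apply (closure_sub_closed opX T (fun y => tclosure opX F (H (inv a) y)) HCc); auto.
  intros y Ty. apply point_in_closure. apply (Hat a Ha (Rle_refl a) y Ty).
Qed.

Lemma choose_n Ein mul inv e (G : is_Rgroup Ein mul inv e) a : Ein a ->
  exists n : nat, (1 <= n)%nat /\ Ein (INR n) /\ Ein (inv (INR n)) /\ inv (INR n) <= a.
Proof.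
  intros Ha. gf G. destruct (arch_n (inv a)) as [n [Hn Hle]].
  pose proof (rg_nat _ _ _ _ G n Hn) as HnE.
  exists n. split; auto. split; auto. split; auto.
  rewrite <- (g_inv_inv _ _ _ _ G a Ha). apply (g_inv_le _ _ _ _ G); auto.
Qed.

Theorem proposition2p3
  (Ein : R -> Prop) (mul : R -> R -> R) (inv : R -> R) (e : R)
  (X : Type) (opX : (X -> Prop) -> Prop) (H : R -> X -> X) (omega : X) :
  is_Rgroup Ein mul inv e ->
  is_topology opX ->
  locally_compact opX ->
  (exists x y : X, x <> y) ->
  is_action Ein mul e H ->
  action_continuous Ein opX H ->
  ABS Ein inv opX H omega ->
  (* (i) *)
  (forall V, tnbhd opX V omega ->
     exists W, tnbhd opX W omega /\ balanced Ein inv e H W /\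
       absorbent Ein inv H W /\ (forall y, W y -> V y)) /\
  (* (ii) *)
  (forall T : X -> Prop, act_bounded Ein inv opX H omega T <-> relatively_compact opX T) /\
  (* (iii) *)
  (exists F, elementary Ein inv e opX H omega F) /\
  (forall F, elementary Ein inv e opX H omega F ->
     (forall n : nat, (1 <= n)%nat -> tnbhd opX (act_image (H (INR n)) F) omega) /\
     (forall V, tnbhd opX V omega ->
        exists n : nat, (1 <= n)%nat /\ forall z, act_image (H (INR n)) F z -> V z) /\
     (forall x, exists n : nat, (1 <= n)%nat /\ act_image (H (inv (INR n))) F x)).
Proof.
  intros G Ht Hlc _ A Hc Habs. gf G.
  split; [|split; [|split]].
  - intros V HV.
    destruct (balanced_nbhd _ _ _ _ _ _ _ G Ht Hlc A Hc Habs V HV) as [W [HWn [HWb HWV]]].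
    exists W. split; auto. split; auto. split; auto.
    intros x. destruct (Habs W HWn x) as [U [a [HU [Ha HUa]]]].
    exists a. split; auto. intros eps He Hle y ->. apply (HUa eps He Hle); eapply nbhd_point; eauto.
  - intros T; split.
    + apply (bounded_relcomp _ _ _ _ _ _ _ G Ht Hlc A Hc Habs).
    + apply (relcomp_bounded _ _ _ _ _ _ _ G Habs).
  - apply (elementary_exists _ _ _ _ _ _ _ G Ht Hlc A Hc Habs).
  - intros F [HFb [HFc HFn]]. split; [|split].
    + intros n Hn. apply (image_nbhd _ _ _ _ _ _ _ G Ht Hlc A Hc Habs); auto.
      apply (rg_nat _ _ _ _ G); auto.
    + intros V HV. destruct (relcomp_bounded _ _ _ _ _ _ _ G Habs F HFc V HV) as [a [Ha Hat]].
      destruct (choose_n _ _ _ _ G a Ha) as [n [Hn [HnE [HiE Hle]]]].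
      exists n. split; auto. intros z [y [Fy ->]].
      pose proof (Hat _ HiE Hle y Fy) as P. rewrite (g_inv_inv _ _ _ _ G) in P; auto.
    + intros x. destruct (Habs F HFn x) as [U [a [HU [Ha HUa]]]].
      destruct (choose_n _ _ _ _ G a Ha) as [n [Hn [HnE [HiE Hle]]]].
      exists n. split; auto. exists (H (INR n) x). split.
      * pose proof (HUa _ HiE Hle x (nbhd_point _ _ _ HU)) as P.
        rewrite (g_inv_inv _ _ _ _ G) in P; auto.
      * symmetry. apply (H_inv_l _ _ _ _ _ G A); auto.
Qed.
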